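(* Let $\mathcal{S}$ be a set with $|\mathcal{S}|=m\ge 2$, let $l\ge 4$, and fix $j$ distinct reduced words of length $g(l)<l/4$ in the free group $\langle\mathcal{S}\rangle$. Then the probability that a uniformly random cyclically reduced word of length $l$ in $\langle\mathcal{S}\rangle$ contains none of these $j$ words as a subword is at most \[ \exp\left(\frac{2}{(2m-1)^{(l/2)-1}}-\frac{lj}{9g(l)(2m-1)^{g(l)}}\right). \] *)

(* Defs.v *)
From Stdlib Require Import Reals.
From mathcomp Require Import all_boot.
Set Implicit Arguments. Unset Strict Implicit. Unset Printing Implicit Defensive.

(* Letters of the free group on the finite generating set S:
   (s, false) is the generator s, (s, true) is its inverse s^-1. *)
Definition letter (S : finType) : finType := (S * bool)%type.

Definition letter_inv (S : finType) (a : letter S) : letter S := (a.1, ~~ a.2).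

Definition reduced (S : finType) (w : seq (letter S)) : bool :=
  sorted (fun a b => b != letter_inv a) w.

Definition cyc_reduced (S : finType) (w : seq (letter S)) : bool :=
  reduced w && (if w is x :: _ then last x w != letter_inv x else true).

Definition cyc_words (S : finType) (l : nat) : {set l.-tuple (letter S)} :=
  [set t : l.-tuple (letter S) | cyc_reduced t].

Definition avoiding_words (S : finType) (l : nat) (ws : seq (seq (letter S)))
  : {set l.-tuple (letter S)} :=
  [set t : l.-tuple (letter S) | cyc_reduced t && all (fun u => ~~ infix u t) ws].

Definition prob_avoid (S : finType) (l : nat) (ws : seq (seq (letter S))) : R :=
  Rdiv (INR #|avoiding_words l ws|) (INR #|cyc_words S l|).

(* Main.v *)
Require Import Defs.
From Stdlib Require Import Reals Lra.
From mathcomp Require Import all_boot.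
From mathcomp Require Import zify.
Set Implicit Arguments. Unset Strict Implicit. Unset Printing Implicit Defensive.

Lemma invK (S : finType) : involutive (@letter_inv S).
Proof. by case=> a b; rewrite /letter_inv /= negbK. Qed.

Lemma card_letter (S : finType) : #|letter S| = #|S| * 2.
Proof. by rewrite /letter card_prod card_bool. Qed.

Definition hd_ok (S : finType) (c : letter S) (z : seq (letter S)) :=
  if z is a :: _ then a != c else true.

Lemma reduced_cons (S : finType) (a : letter S) z :
  reduced (a :: z) = hd_ok (letter_inv a) z && reduced z.
Proof. by case: z. Qed.

Lemma card_fibers (X Y : finType) (f : X -> Y) (A : {set X}) :
  #|A| = \sum_(y : Y) #|[set x in A | f x == y]|.
Proof.
rewrite -sum1_card (partition_big f predT) //=; apply: eq_bigr => y _.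
by rewrite -sum1_card; apply: eq_bigl => x; rewrite inE.
Qed.

Lemma inj_card (X Y : finType) (f : X -> Y) (A : {set X}) (B : {set Y}) :
  {in A &, injective f} -> (forall x, x \in A -> f x \in B) -> #|A| <= #|B|.
Proof.
move=> inj fAB; rewrite -(card_in_imset inj); apply: subset_leq_card.
by apply/subsetP => y /imsetP [x xA ->]; apply: fAB.
Qed.

Lemma count_red (S : finType) n (c : letter S) :
  #|[set z : n.-tuple (letter S) | reduced z && hd_ok c z]| <= (#|letter S|.-1)^n.
Proof.
elim: n c => [|n IH] c.
  by rewrite expn0; apply: leq_trans (max_card _) _; rewrite card_tuple expn0.
rewrite (card_fibers (fun z : n.+1.-tuple (letter S) => thead z)).
apply: (@leq_trans (\sum_(a : letter S | a != c) (#|letter S|.-1)^n)).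
  rewrite (bigID (fun a => a != c)) /= -[X in _ <= X]addn0; apply: leq_add.
    apply: leq_sum => a ac.
    apply: (leq_trans _ (IH (letter_inv a))).
    apply: (inj_card (f := fun z : n.+1.-tuple (letter S) => [tuple of behead z])).
      move=> z1 z2; rewrite !inE => /andP [_ /eqP h1] /andP [_ /eqP h2] /(congr1 val) /= hb.
      by rewrite (tuple_eta z1) (tuple_eta z2) h1 h2; apply: val_inj => /=; rewrite hb.
    move=> z; case/tupleP: z => a' z'; rewrite !inE /= theadE => /andP [/andP [red _] /eqP ha].
    by move: red; rewrite -[path _ _ _]/(reduced (a' :: z')) reduced_cons ha => /andP [h1 h2]; rewrite h1 h2.
  rewrite leqn0; apply/eqP/big1 => a /negbNE /eqP ->; apply/eqP; rewrite cards_eq0; apply/eqP.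
  apply/setP => z; rewrite !inE; apply/negbTE; apply/negP => /andP [/andP [_ h] /eqP e].
  by move: h; rewrite (tuple_eta z) /= e eqxx.
by rewrite sum_nat_const cardC1 expnS.
Qed.

Lemma inv_swap (S : finType) (a b : letter S) :
  (a != letter_inv b) = (b != letter_inv a).
Proof. by apply/idP/idP; apply: contra => /eqP ->; rewrite invK. Qed.

Definition mkt (T : Type) n (F : nat -> T) : n.-tuple T :=
  @Tuple n T (mkseq F n) (introT eqP (size_mkseq F n)).

Lemma nth_mkt (T : Type) (x0 : T) n F i : i < n -> nth x0 (mkt n F) i = F i.
Proof. by move=> h; rewrite /= nth_mkseq. Qed.

Lemma mktE (T : Type) n (F : nat -> T) : val (mkt n F) = mkseq F n.
Proof. by []. Qed.

Definition cr (S : finType) (x0 : letter S) l (w : seq (letter S)) :=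
  forall i, i < l -> nth x0 w (i.+1 %% l) != letter_inv (nth x0 w i).

Lemma crP (S : finType) (x0 : letter S) l (w : l.-tuple (letter S)) :
  0 < l -> cyc_reduced w <-> cr x0 l w.
Proof.
case: w => [[|a s] /= /eqP sz] l0; first by rewrite -sz in l0.
subst l; rewrite /cyc_reduced /= -[path _ _ _]/(reduced (a :: s)).
split.
- move=> /andP [/(sortedP x0) red hl] i il.
  case: (ltnP i.+1 (size s).+1) => hi.
    by rewrite modn_small //; apply: red.
  have ei : i = size s by apply/anti_leq/andP; split; [exact: il | exact: hi].
  rewrite ei modnn /= inv_swap -(last_nth x0 a s); exact: hl.
- move=> h; apply/andP; split.
    apply/(sortedP x0) => i hi; have := h i; rewrite modn_small //; apply; exact: ltnW hi.
  have := h (size s) (ltnSn _); rewrite modnn /= inv_swap -(last_nth x0 a s) //.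
Qed.

Definition inR s k p := (s <= p) && (p < s + k.+2).

Definition restr (S : finType) l s k (t : l.-tuple (letter S)) :
  {ffun 'I_l -> option (letter S)} :=
  [ffun i : 'I_l => if inR s k i then None else Some (tnth t i)].

Lemma restrP (S : finType) (x0 : letter S) l s k (t w : l.-tuple (letter S)) :
  restr s k t = restr s k w <->
  (forall i, i < l -> ~~ inR s k i -> nth x0 t i = nth x0 w i).
Proof.
split.
- move=> /ffunP h i il nr; have := h (Ordinal il).
  by rewrite !ffunE /= (negbTE nr) => [[]]; rewrite !(tnth_nth x0).
- move=> h; apply/ffunP => i; rewrite !ffunE; case: ifP => // /negbT nr.
  by rewrite !(tnth_nth x0) h.
Qed.

Definition fiber (S : finType) l s k (w : l.-tuple (letter S)) :=
  [set t : l.-tuple (letter S) | cyc_reduced t && (restr s k t == restr s k w)].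

Definition p0 l s := if s is 0 then l.-1 else s.-1.

Lemma p0P l s k : s + k.+2 <= l -> k.+3 <= l ->
  [/\ p0 l s < l, ~~ inR s k (p0 l s) & (p0 l s).+1 %% l = s].
Proof.
rewrite /p0 /inR; case: s => [|s] h1 h2.
  split; [lia | lia | ]. by rewrite prednK ?modnn //; lia.
by split; [lia | lia | rewrite modn_small //; lia].
Qed.

Definition phi (S : finType) (x0 : letter S) l s k (t : l.-tuple (letter S)) :
  k.+2.-tuple (letter S) := mkt k.+2 (fun j => nth x0 t (s + j)).

Lemma fiber_ub (S : finType) (x0 : letter S) l s k (w : l.-tuple (letter S)) :
  s + k.+2 <= l -> k.+3 <= l ->
  #|fiber s k w| <= (#|letter S|.-1) ^ k.+2.
Proof.
move=> h1 h2; have [pl pr ps] := p0P h1 h2.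
have l0 : 0 < l by lia.
apply: leq_trans (count_red k.+2 (letter_inv (nth x0 w (p0 l s)))).
apply: (inj_card (f := phi x0 s k)).
  move=> t1 t2; rewrite !inE => /andP [c1 /eqP r1] /andP [c2 /eqP r2] e.
  move/(restrP x0): r1 => r1; move/(restrP x0): r2 => r2.
  apply: val_inj; apply: (eq_from_nth (x0 := x0)); first by rewrite !size_tuple.
  move=> i; rewrite size_tuple => il.
  case: (boolP (inR s k i)) => hi; last by rewrite r1 // r2.
  have := congr1 (fun z : k.+2.-tuple _ => nth x0 z (i - s)) e.
  move: hi; rewrite /inR => /andP [hs hk].
  by rewrite /phi !nth_mkt ?subnKC //; lia.
move=> t; rewrite !inE => /andP [/(crP x0 _ l0) c /eqP /(restrP x0) r].
apply/andP; split.
  apply/(sortedP x0) => i; rewrite size_tuple => hi.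
  rewrite /phi !nth_mkt; try lia.
  have := c (s + i); rewrite modn_small; last lia.
  by rewrite addnS; apply; lia.
rewrite /= addn0 -(r _ pl pr).
by have := c _ pl; rewrite ps.
Qed.

Definition repl (S : finType) (x0 : letter S) l s k (w : l.-tuple (letter S))
  (z : seq (letter S)) : l.-tuple (letter S) :=
  mkt l (fun i => if inR s k i then nth x0 z (i - s) else nth x0 w i).

Lemma cr_repl (S : finType) (x0 : letter S) l s k (w : l.-tuple (letter S)) z :
  s + k.+2 <= l -> k.+3 <= l -> cr x0 l w -> size z = k.+2 -> reduced z ->
  nth x0 z 0 != letter_inv (nth x0 w (p0 l s)) ->
  nth x0 w ((s + k.+2) %% l) != letter_inv (nth x0 z k.+1) ->
  cr x0 l (repl x0 s k w z).
Proof.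
move=> h1 h2 cw sz /(sortedP x0) rz hx hy i il.
have [pl pr ps] := p0P h1 h2.
rewrite /repl !nth_mkt //; last by apply: ltn_pmod; lia.
case: (ltnP i.+1 l) => hi.
- rewrite modn_small //.
  case: (boolP (inR s k i)) => ri; case: (boolP (inR s k i.+1)) => ri'.
  + move: (ri) (ri'); rewrite /inR => /andP [a1 a2] /andP [b1 b2].
    have := rz (i - s); rewrite sz -subSn //; apply; lia.
  + move: (ri) (ri'); rewrite /inR => /andP [a1 a2]; rewrite negb_and -!ltnNge => hb.
    have ei : i = s + k.+1 by lia.
    move: hy; rewrite ei addKn modn_small; last lia.
    by rewrite addnS.
  + move: (ri) (ri'); rewrite /inR negb_and -!ltnNge => ha /andP [b1 b2].
    have ei : i.+1 = s by lia.
    rewrite ei subnn; move: hx; rewrite -ei /p0 //.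
  + by have := cw i il; rewrite modn_small.
- have ei : i.+1 = l by lia.
  rewrite ei modnn.
  case: (boolP (inR s k i)) => ri.
  + have es : s + k.+2 = l by move: ri; rewrite /inR => /andP [a1 a2]; lia.
    have n0 : ~~ inR s k 0 by rewrite /inR negb_and -!ltnNge; lia.
    rewrite (negbTE n0); move: hy; rewrite es modnn.
    by rewrite (_ : i - s = k.+1) //; lia.
  + case: (boolP (inR s k 0)) => r0.
    * have s0 : s = 0 by move: r0; rewrite /inR => /andP [a1 a2]; lia.
      move: hx; rewrite s0 subn0 /p0 (_ : l.-1 = i) //; lia.
    * by have := cw i il; rewrite ei modnn.
Qed.

Lemma card_split (X : finType) (A : {set X}) (P : pred X) :
  #|[set x in A | P x]| + #|[set x in A | ~~ P x]| = #|A|.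
Proof.
rewrite -(cardsID [set x | P x] A); congr (_ + _); apply: eq_card => x;
by rewrite !inE; case: (x \in A); case: (P x).
Qed.

Lemma sum_fib_le (X : finType) (Y : eqType) (f : X -> Y) (A : {set X}) (ys : seq Y) :
  uniq ys -> \sum_(y <- ys) #|[set x in A | f x == y]| <= #|[set x in A | f x \in ys]|.
Proof.
elim: ys => [|y ys IH] /=; first by rewrite big_nil.
move=> /andP [ny u]; rewrite big_cons.
rewrite -(card_split [set x in A | f x \in y :: ys] (fun x => f x == y)).
apply: leq_add.
  apply: eq_leq; apply: eq_card => x; rewrite !inE ?in_cons.
  by case: (x \in A); case: (f x == y); rewrite ?andbF.
apply: leq_trans (IH u) _; apply: eq_leq; apply: eq_card => x; rewrite !inE ?in_cons.
case: (x \in A) => //=; case: (f x =P y) => [->|] //=.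
  by rewrite (negbTE ny).
by rewrite andbT.
Qed.

Lemma sum_const_le (Y : eqType) (ys : seq Y) c (F : Y -> nat) :
  (forall y, y \in ys -> c <= F y) -> size ys * c <= \sum_(y <- ys) F y.
Proof.
elim: ys => [|y ys IH] h; first by rewrite big_nil.
rewrite big_cons /= mulSn; apply: leq_add; first by apply: h; rewrite inE eqxx.
by apply: IH => z zin; apply: h; rewrite inE zin orbT.
Qed.

Lemma card2ne (T : finType) (a b : T) : #|T| - 2 <= #|[set g | (g != a) && (g != b)]|.
Proof.
have := cardsC [set a; b]; rewrite cards2 => h.
have -> : [set g | (g != a) && (g != b)] = ~: [set a; b].
  by apply/setP => g; rewrite !inE negb_or.
by move: h; case: (a != b) => /=; lia.
Qed.

Lemma fiber_lb (S : finType) (x0 : letter S) l s k (ws : seq (seq (letter S)))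
  (w : l.-tuple (letter S)) :
  0 < k -> s + k.+2 <= l -> k.+3 <= l -> cyc_reduced w -> uniq ws ->
  all (fun u => reduced u && (size u == k)) ws ->
  size ws * (#|letter S| - 2) ^ 2 <=
  #|[set t in fiber s k w | take k (drop s.+1 t) \in ws]|.
Proof.
move=> k0 h1 h2 cwr uws hall.
have l0 : 0 < l by lia.
have cw := (iffLR (crP x0 w l0) cwr).
apply: leq_trans (sum_fib_le (fun t : l.-tuple (letter S) => take k (drop s.+1 t))
   (fiber s k w) uws).
apply: sum_const_le => u uin; have /andP [ru /eqP su] := allP hall u uin.
set x := nth x0 w (p0 l s); set y := nth x0 w ((s + k.+2) %% l).
set G1 := [set g | (g != letter_inv x) && (g != letter_inv (nth x0 u 0))].
set G2 := [set g | (g != letter_inv (nth x0 u k.-1)) && (g != letter_inv y)].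
apply: (@leq_trans (#|G1| * #|G2|)).
  by rewrite -mulnn leq_mul // card2ne.
rewrite -cardsX.
have hwin : forall g1 g2,
    take k (drop s.+1 (repl x0 s k w (g1 :: u ++ [:: g2]))) = u.
  move=> g1 g2; apply: (eq_from_nth (x0 := x0)).
    by rewrite size_takel ?su // size_drop size_tuple; lia.
  move=> j; rewrite size_takel ?size_drop ?size_tuple; last lia.
  move=> hj; rewrite nth_take // nth_drop /repl nth_mkt; last lia.
  have -> : inR s k (s.+1 + j) by apply/andP; split; lia.
  rewrite (_ : s.+1 + j - s = j.+1); last lia.
  by rewrite /= nth_cat su hj.
apply: (inj_card (f := fun g : letter S * letter S =>
                         repl x0 s k w (g.1 :: u ++ [:: g.2]))).
  move=> [g1 g2] [g1' g2'] _ _ /= e.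
  have e1 := congr1 (fun t : l.-tuple _ => nth x0 t s) e.
  have e2 := congr1 (fun t : l.-tuple _ => nth x0 t (s + k.+1)) e.
  have i1 : inR s k s by apply/andP; split; lia.
  have i2 : inR s k (s + k.+1) by apply/andP; split; lia.
  move: e1 e2; rewrite /= /repl !nth_mkt; try lia.
  rewrite i1 i2 subnn addKn /= !nth_cat su ltnn subnn /= => -> ->.
  by [].
move=> [g1 g2]; rewrite !inE [(g1, g2).1]/= [(g1, g2).2]/= => /andP [/andP [a1 a2] /andP [b1 b2]].
rewrite hwin eqxx !andbT.
apply/andP; split.
  apply/(crP x0 _ l0); apply: cr_repl => //.
  - by rewrite /= size_cat su addn1.
  - case: u uin ru su a2 b1 {hwin G1 G2} => [|a u'] uin ru su a2 b1.
      by rewrite -su in k0.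
    rewrite /reduced /= cat_path /= -[path _ a u']/(reduced (a :: u')) ru andbT inv_swap a2 /=.
    by move: b1; rewrite -su /= -(last_nth x0 a u').
  - by rewrite /= nth_cat su ltnn subnn /= inv_swap.
apply/eqP/(restrP x0) => i il ni.
by rewrite /repl nth_mkt // (negbTE ni).
Qed.

Definition Tset (S : finType) l k (ws : seq (seq (letter S))) r :
  {set l.-tuple (letter S)} :=
  [set t : l.-tuple (letter S) | cyc_reduced t &&
     [forall i : 'I_r, take k (drop (i * k.+1).+1 t) \notin ws]].

Lemma forall_ordS (P : nat -> bool) r :
  [forall i : 'I_r.+1, P i] = [forall i : 'I_r, P i] && P r.
Proof.
apply/forallP/andP => [h | [/forallP h hr] i].
  split; [apply/forallP => i; exact: (h (widen_ord (leqnSn r) i)) | exact: (h ord_max)].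
case: (ltnP i r) => hi; first exact: (h (Ordinal hi)).
have -> : (i : nat) = r by have := ltn_ord i; lia.
exact: hr.
Qed.

Lemma win_agree (S : finType) (x0 : letter S) l k r (t w : l.-tuple (letter S)) i :
  i < r -> restr (r * k.+1) k t = restr (r * k.+1) k w ->
  take k (drop (i * k.+1).+1 t) = take k (drop (i * k.+1).+1 w).
Proof.
move=> ir /(restrP x0) h.
apply: (eq_from_nth (x0 := x0)); first by rewrite !size_take_min !size_drop !size_tuple.
move=> j; rewrite size_take_min size_drop size_tuple leq_min => /andP [hjk hjl].
rewrite !nth_take // !nth_drop; apply: h.
  by lia.
rewrite /inR negb_and -ltnNge; apply/orP; left.
have : i.+1 * k.+1 <= r * k.+1 by rewrite leq_mul2r ir orbT.
rewrite mulSn; lia.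
Qed.

Lemma nat_step F B D b : b <= B -> B <= F -> F <= D -> (F - B) * D <= F * (D - b).
Proof.
move=> h1 h2 h3; rewrite mulnBl mulnBr; apply: leq_sub2l.
by rewrite [B * D]mulnC leq_mul.
Qed.

Lemma Tset_step (S : finType) (x0 : letter S) l k (ws : seq (seq (letter S))) r :
  0 < k -> k.+3 <= l -> r.+1 * k.+1 + 1 <= l -> uniq ws ->
  all (fun u => reduced u && (size u == k)) ws ->
  #|Tset l k ws r.+1| * (#|letter S|.-1) ^ k.+2 <=
  #|Tset l k ws r| * ((#|letter S|.-1) ^ k.+2 - size ws * (#|letter S| - 2) ^ 2).
Proof.
move=> k0 h2 hr uws hall.
set s := r * k.+1.
have h1 : s + k.+2 <= l by rewrite /s; move: hr; rewrite mulSn; lia.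
rewrite (card_fibers (restr s k) (Tset l k ws r.+1)).
rewrite (card_fibers (restr s k) (Tset l k ws r)) !big_distrl /=.
apply: leq_sum => y _.
case: (set_0Vmem [set t in Tset l k ws r | restr s k t == y]) => [e0 | [w wi]].
  rewrite e0 cards0 mul0n leqn0 muln_eq0; apply/orP; left.
  rewrite cards_eq0; apply/eqP/setP => t; rewrite !inE; apply/negbTE/negP.
  move=> /andP [/andP [ct ft] ry].
  have : t \in [set t in Tset l k ws r | restr s k t == y].
    by rewrite !inE ct ry andbT; move: ft;
      rewrite (forall_ordS (fun i => take k (drop (i * k.+1).+1 t) \notin ws)) => /andP [].
  by rewrite e0 inE.
move: wi; rewrite !inE => /andP [/andP [cw fw] /eqP ey].
have eA : [set t in Tset l k ws r | restr s k t == y] = fiber s k w.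
  apply/setP => t; rewrite !inE -ey.
  case: (boolP (restr s k t == restr s k w)) => e; rewrite ?andbF ?andbT //.
  have -> : [forall i : 'I_r, take k (drop (i * k.+1).+1 t) \notin ws].
    apply/forallP => i.
    by rewrite (win_agree x0 (ltn_ord i) (eqP e)); move/forallP: fw; apply.
  by rewrite andbT.
have eB : [set t in Tset l k ws r.+1 | restr s k t == y] =
          [set t in fiber s k w | take k (drop s.+1 t) \notin ws].
  apply/setP => t; rewrite !inE -ey (forall_ordS (fun i => take k (drop (i * k.+1).+1 t) \notin ws)).
  case: (boolP (restr s k t == restr s k w)) => e; rewrite ?andbF ?andbT //=.
  have -> : [forall i : 'I_r, take k (drop (i * k.+1).+1 t) \notin ws].
    apply/forallP => i.
    by rewrite (win_agree x0 (ltn_ord i) (eqP e)); move/forallP: fw; apply.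
  by [].
rewrite eA eB.
have hs := card_split (fiber s k w) (fun t => take k (drop s.+1 t) \in ws).
have hub := fiber_ub x0 w h1 h2.
have hlb := fiber_lb x0 k0 h1 h2 cw uws hall.
have -> : #|[set t in fiber s k w | take k (drop s.+1 t) \notin ws]| =
          #|fiber s k w| - #|[set t in fiber s k w | take k (drop s.+1 t) \in ws]|.
  by rewrite -hs addKn.
apply: nat_step => //.
by rewrite -hs leq_addr.
Qed.

Lemma Tset0 (S : finType) l k (ws : seq (seq (letter S))) :
  Tset l k ws 0 = cyc_words S l.
Proof.
apply/setP => t; rewrite !inE.
have -> : [forall i : 'I_0, take k (drop (i * k.+1).+1 t) \notin ws] by apply/forallP => [[]].
by rewrite andbT.
Qed.

Lemma avoid_sub (S : finType) l k (ws : seq (seq (letter S))) r :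
  avoiding_words l ws \subset Tset l k ws r.
Proof.
apply/subsetP => t; rewrite !inE => /andP [ct ha]; rewrite ct /=.
apply/forallP => i; apply/negP => win.
have := allP ha _ win; rewrite /= => /negP; apply.
exact: infix_trans (infix_take _ _) (infix_drop _ _).
Qed.

Lemma Tset_iter (S : finType) (x0 : letter S) l k (ws : seq (seq (letter S))) :
  0 < k -> k.+3 <= l -> uniq ws -> all (fun u => reduced u && (size u == k)) ws ->
  forall r, r <= l.-1 %/ k.+1 ->
  #|Tset l k ws r| * ((#|letter S|.-1) ^ k.+2) ^ r <=
  #|cyc_words S l| * ((#|letter S|.-1) ^ k.+2 - size ws * (#|letter S| - 2) ^ 2) ^ r.
Proof.
move=> k0 h2 uws hall; elim => [|r IH] hr; first by rewrite !expn0 !muln1 Tset0.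
have hr' : r.+1 * k.+1 + 1 <= l.
  have := leq_trunc_div l.-1 k.+1.
  have : r.+1 * k.+1 <= l.-1 %/ k.+1 * k.+1 by rewrite leq_mul2r hr orbT.
  lia.
have st := Tset_step x0 k0 h2 hr' uws hall.
move: st IH; set D := _ ^ k.+2; set E := D - _ => st IH.
rewrite expnS mulnA; apply: leq_trans (leq_mul st (leqnn _)) _.
rewrite mulnAC expnSr mulnA leq_mul2r; apply/orP; right.
by apply: IH; lia.
Qed.

Lemma nat_N (l k : nat) : 0 < k -> 4 * k < l -> l <= 4 * k * (l.-1 %/ k.+1).
Proof.
move=> k0 hl.
set N := l.-1 %/ k.+1.
have e := divn_eq l.-1 k.+1.
have r0 : l.-1 %% k.+1 < k.+1 by apply: ltn_pmod.
rewrite -/N in e.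
have : l * k.+1 <= 4 * k * N * k.+1.
  move: e r0; set r := l.-1 %% k.+1 => e r0.
  nia.
by rewrite leq_mul2r.
Qed.

Lemma nat_final (l k j T : nat) : 0 < k -> 4 * k < l -> 4 <= T ->
  l * j * (T.-1) ^ k.+2 <=
  (l.-1 %/ k.+1) * (j * (T - 2) ^ 2) * (9 * k * (T.-1) ^ k).
Proof.
move=> k0 hl hT.
have hN := nat_N k0 hl.
set N := l.-1 %/ k.+1 in hN *.
set M := T.-1.
have h1 : 2 * M <= 3 * (T - 2) by rewrite /M; lia.
have h2 : 4 * (M * M) <= 9 * ((T - 2) * (T - 2)).
  have := leq_mul h1 h1; rewrite mulnACA [(3 * _) * _]mulnACA //.
have h3 : l * (M * M) <= 9 * k * N * ((T - 2) * (T - 2)).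
  have a := leq_mul hN (leqnn (M * M)).
  have b := leq_mul (leqnn (k * N)) h2.
  nia.
have c := leq_mul h3 (leqnn (j * M ^ k)).
rewrite (expnSr M k.+1) (expnSr M k) -mulnn.
move: c; set P := M ^ k; nia.
Qed.

Local Open Scope R_scope.

Lemma INR_muln (m n : nat) : INR (m * n)%N = INR m * INR n.
Proof. by rewrite -multE mult_INR. Qed.

Lemma INR_expn (m n : nat) : INR (m ^ n)%N = INR m ^ n.
Proof. elim: n => [|n IH]; first by rewrite expn0. by rewrite expnS INR_muln IH. Qed.

Lemma INR_subn (m n : nat) : (n <= m)%N -> INR (m - n)%N = INR m - INR n.
Proof. by move=> h; rewrite -minusE minus_INR //; apply/leP. Qed.

Lemma leINR (m n : nat) : (m <= n)%N -> INR m <= INR n.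
Proof. by move=> /leP; apply: le_INR. Qed.

Lemma ltINR0 (n : nat) : (0 < n)%N -> 0 < INR n.
Proof. by move=> /ltP; apply: lt_0_INR. Qed.

Lemma R_div_le (a c p q : R) : 0 < c -> 0 < q -> a * q <= c * p -> a / c <= p / q.
Proof.
move=> hc hq h.
apply: (Rmult_le_reg_r (c * q)); first by apply: Rmult_lt_0_compat.
have -> : a / c * (c * q) = a * q by field; lra.
have -> : p / q * (c * q) = c * p by field; lra.
exact: h.
Qed.

Lemma exp_pow_n (x : R) (n : nat) : exp x ^ n = exp (INR n * x).
Proof.
elim: n => [|n IH]; first by rewrite /= Rmult_0_l exp_0.
by rewrite S_INR /= IH -exp_plus; congr exp; ring.
Qed.

Lemma exp_mono (x y : R) : x <= y -> exp x <= exp y.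
Proof.
move=> h; case: (Rle_lt_or_eq_dec _ _ h) => [hl | ->]; last by apply: Rle_refl.
by apply: Rlt_le; apply: exp_increasing.
Qed.

Lemma div_le1 (a c : nat) : (a <= c)%N -> INR a / INR c <= 1.
Proof.
move=> h; case: (posnP c) => [c0 | cp].
  have a0 : a = 0%N by move: h; rewrite c0; lia.
  by rewrite a0 /= /Rdiv Rmult_0_l; lra.
have cr := ltINR0 cp.
apply: (Rmult_le_reg_r (INR c)) => //.
rewrite /Rdiv Rmult_assoc Rinv_l; last lra.
by rewrite Rmult_1_r Rmult_1_l; apply: leINR.
Qed.

(* m = #|S|, k = g(l), j = size ws. *)
Theorem lemma7p3 (S : finType) (l k : nat) (ws : seq (seq (letter S))) :
  (2 <= #|S|)%N -> (4 <= l)%N -> (4 * k < l)%N ->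
  uniq ws -> all (fun u => reduced u && (size u == k)) ws ->
  prob_avoid l ws <=
   exp (2 / Rpower (2 * INR #|S| - 1) (INR l / 2 - 1)
        - INR l * INR (size ws) / (9 * INR k * (2 * INR #|S| - 1) ^ k)).
Proof.
move=> hS hl hkl uws hall.
have /card_gt0P [s0 _] : (0 < #|S|)%N by lia.
pose x0 : letter S := (s0, false).
rewrite /prob_avoid.
set a := #|avoiding_words l ws|; set c := #|cyc_words S l|.
have hac : (a <= c)%N.
  apply: subset_leq_card; apply/subsetP => t; rewrite !inE => /andP [] //.
have Ppos : 0 < Rpower (2 * INR #|S| - 1) (INR l / 2 - 1) by rewrite /Rpower; apply: exp_pos.
have A0 : 0 <= 2 / Rpower (2 * INR #|S| - 1) (INR l / 2 - 1).
  by apply: Rlt_le; apply: Rmult_lt_0_compat; [lra | apply: Rinv_0_lt_compat].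
set P := 2 / Rpower _ _ in A0 *.
have cdiv0 : forall a' : nat, a' = 0%N -> INR a' / INR c = 0.
  by move=> a' ->; rewrite /= /Rdiv Rmult_0_l.
case: (posnP k) => [k0 | kpos].
  subst k.
  case E: ws => [|u ws'].
    apply: Rle_trans (div_le1 hac) _.
    rewrite /= Rmult_0_r /Rdiv Rmult_0_l Rminus_0_r.
    by have := exp_ineq1_le P; lra.
  have a0 : a = 0%N.
    apply/eqP; rewrite cards_eq0; apply/eqP/setP => t; rewrite !inE.
    apply/negbTE; apply/negP => /andP [_]; rewrite E => /= /andP [hu _].
    move: hall; rewrite E => /= /andP [/andP [_ /eqP su] _].
    by move: hu; rewrite (size0nil su) infix0s.
  by rewrite (cdiv0 _ a0); apply: Rlt_le; apply: exp_pos.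
set T := #|letter S|.
have hT : T = (#|S| * 2)%N by rewrite /T card_letter.
have hl3 : (k.+3 <= l)%N by lia.
set N := (l.-1 %/ k.+1)%N.
set D := ((T.-1) ^ k.+2)%N.
set b := (size ws * (T - 2) ^ 2)%N.
have key : (a * D ^ N <= c * (D - b) ^ N)%N.
  have := Tset_iter x0 kpos hl3 uws hall (leqnn N).
  apply: leq_trans; rewrite leq_mul2r; apply/orP; right.
  exact: subset_leq_card (avoid_sub _ _ _ _).
have N1 : (0 < N)%N by rewrite /N divn_gt0 //; lia.
have D0 : (0 < D)%N by rewrite /D expn_gt0; apply/orP; left; lia.
have eD : D = ((T.-1) ^ k.+2)%N by [].
have eb : b = (size ws * (T - 2) ^ 2)%N by [].
have eN : N = (l.-1 %/ k.+1)%N by [].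
clearbody N D b.
case: (leqP b D) => hbD; last first.
  have : (D - b = 0)%N by lia.
  move=> e; move: key; rewrite e exp0n // muln0 leqn0 muln_eq0 expn_eq0 => /orP [/eqP a0 | /andP [/eqP D00 _]].
    by rewrite (cdiv0 _ a0); apply: Rlt_le; apply: exp_pos.
  by rewrite D00 in D0.
set x := INR b / INR D.
have Dr : 0 < INR D by apply: ltINR0.
have x0le : 0 <= x by apply: Rmult_le_pos; [apply: pos_INR | apply: Rlt_le; apply: Rinv_0_lt_compat].
have x1 : x <= 1.
  rewrite /x; apply: (Rmult_le_reg_r (INR D)) => //.
  rewrite /Rdiv Rmult_assoc Rinv_l; last lra.
  by rewrite Rmult_1_r Rmult_1_l; apply: leINR.
have stepA : INR a / INR c <= exp (- (INR N * x)).
  case: (posnP c) => [c0 | cp].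
    have a0 : a = 0%N by move: hac; rewrite c0; lia.
    by rewrite (cdiv0 _ a0); apply: Rlt_le; apply: exp_pos.
  have keyR : INR a * INR D ^ N <= INR c * ((1 - x) ^ N * INR D ^ N).
    have := leINR key; rewrite !INR_muln !INR_expn INR_subn //.
    have -> : INR D - INR b = (1 - x) * INR D by rewrite /x; field; lra.
    by rewrite Rpow_mult_distr.
  have hpow : 0 < INR D ^ N by apply: pow_lt.
  apply: (@Rle_trans _ ((1 - x) ^ N)).
    have cr := ltINR0 cp.
    apply: (Rmult_le_reg_r (INR c)) => //.
    rewrite /Rdiv Rmult_assoc Rinv_l; last lra.
    rewrite Rmult_1_r; apply: (Rmult_le_reg_r (INR D ^ N)) => //.
    by rewrite [(1 - x) ^ N * INR c]Rmult_comm Rmult_assoc.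
  have -> : - (INR N * x) = INR N * (- x) by ring.
  rewrite -exp_pow_n; apply: pow_incr; split; first lra.
  by have := exp_ineq1_le (- x); lra.
apply: Rle_trans stepA (exp_mono _).
have hT4 : (4 <= T)%N by rewrite hT; lia.
have hM : 2 * INR #|S| - 1 = INR (T.-1).
  rewrite -subn1 INR_subn; last lia.
  by rewrite hT INR_muln /=; ring.
have hY : 9 * INR k * INR (T.-1) ^ k = INR (9 * k * T.-1 ^ k)%N.
  rewrite !INR_muln INR_expn; congr (_ * _ * _).
  by rewrite INR_IZR_INZ.
rewrite hM hY.
suff : INR l * INR (size ws) / INR (9 * k * T.-1 ^ k) <= INR N * x by lra.
have -> : INR N * x = INR (N * b) / INR D by rewrite /x INR_muln /Rdiv Rmult_assoc.
rewrite -INR_muln; apply: R_div_le => //.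
  by apply: ltINR0; rewrite !muln_gt0 expn_gt0; apply/andP; split; [lia | apply/orP; left; lia].
rewrite -!INR_muln; apply: leINR.
rewrite eD eb eN [X in (_ <= X)%N]mulnC; exact: nat_final.
Qed.
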